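(* Let $\ell\geqslant 1$ be real. Assume $x\geqslant\exp\left(7^{28}(12e\ell)^{28\log(192e\ell)}\right)$ and $z\geqslant x^{\frac{1}{3\ell}}$. Then $$\#\{n\leqslant z:\ P^+(n)<\log x\,\log\log x\}<z^{1/4}.$$
   Context: $n$ ranges over positive integers; $P^+(n)$ denotes the largest prime factor of $n$ (with $P^+(1)=1$). *)

(* Defs.v *)
From Stdlib Require Import Reals.
From mathcomp Require Import all_boot.

(* P^+(n): largest prime factor of n, with P^+(1) = 1 (mathcomp's max_pdiv). *)
Definition Pbig (n : nat) : nat := max_pdiv n.

(* #{ n positive integer : n <= z /\ P n }.  Every positive integer n <= z
   lies in iota 1 (Z.to_nat (up z)) since n <= z < up z. *)
Definition count_upto (z : R) (P : nat -> bool) : nat :=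
  size [seq n <- iota 1 (Z.to_nat (up z)) |
         (if Rle_dec (INR n) z then true else false) && P n].

(* Main.v *)
Require Import Defs.
From Stdlib Require Import Reals Lra Lia ZArith.
From mathcomp Require Import all_boot.

Definition A (q N : nat) : nat := count (fun n => max_pdiv n < q) (iota 1 N).

Lemma iota1S N : iota 1 N.+1 = iota 1 N ++ [:: N.+1].
Proof. by rewrite -[N.+1]addn1 iotaD (addnC 1 N). Qed.

Lemma count_mul (q : nat) (P : pred nat) N : 0 < q ->
  count (fun n => (q %| n) && P n) (iota 1 N) = count (fun m => P (q * m)) (iota 1 (N %/ q)).
Proof.
move=> q0; elim: N => [|N IH]; first by rewrite div0n.
rewrite iota1S count_cat IH.
case: (boolP (q %| N.+1)) => H /=.
- have -> : N.+1 %/ q = (N %/ q).+1 by rewrite divnS // H.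
  rewrite iota1S count_cat /=.
  have E : q * (N %/ q).+1 = N.+1.
    by rewrite -(divnK H) divnS // H mulnC.
  by rewrite E H.
- have -> : N.+1 %/ q = N %/ q by rewrite divnS // (negbTE H).
  by rewrite (negbTE H) /= !addn0.
Qed.

Lemma pdiv_small n : max_pdiv n <= 1 \/ prime (max_pdiv n).
Proof.
case: (leqP n 1) => h; last by right; apply: max_pdiv_prime.
left; case: n h => [|[|]] //.
Qed.

Lemma smoothP n Q : 0 < n -> 1 < Q ->
  (max_pdiv n < Q) <-> (forall p, prime p -> p %| n -> p < Q).
Proof.
move=> n0 Q1; split.
- move=> h p pp pn; apply: leq_ltn_trans h; apply: max_pdiv_max.
  by rewrite mem_primes pp n0 pn.
- move=> h; case: (leqP n 1) => hn.
  + by case: n n0 hn h => [|[|]].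
  + apply: h; [exact: max_pdiv_prime | exact: max_pdiv_dvd].
Qed.

Lemma A0 q : A q 0 = 0. Proof. by []. Qed.

Lemma A2 N : A 2 N <= 1.
Proof.
rewrite /A; apply: leq_trans (_ : count (fun n => n <= 1) (iota 1 N) <= 1).
- apply: sub_count => n /= h; rewrite leqNgt; apply/negP => hn.
  by move: (prime_gt1 (max_pdiv_prime hn)); rewrite ltnNge -ltnS h.
- case: N => [|N] //=.
  rewrite (eq_in_count (a2 := pred0)) ?count_pred0 //.
  by move=> n; rewrite mem_iota => /andP [h _] /=; rewrite leqNgt h.
Qed.

Lemma A_nonprime q N : 1 < q -> ~~ prime q -> A q.+1 N = A q N.
Proof.
move=> q1 np; apply: eq_in_count => n _ /=.
rewrite ltnS leq_eqVlt; case: eqP => // E.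
case: (pdiv_small n); rewrite E.
- by move=> h; move: q1; rewrite ltnNge h.
- by rewrite (negbTE np).
Qed.

Lemma count_split (T : Type) (a b : pred T) s :
  count a s = count (fun x => a x && ~~ b x) s + count (fun x => b x && a x) s.
Proof.
elim: s => [|x s IH] //=; rewrite IH.
by case: (a x); case: (b x) => /=; rewrite ?add0n ?addnS ?addSn ?addnA.
Qed.

Lemma A_prime q N : prime q -> A q.+1 N = A q N + A q.+1 (N %/ q).
Proof.
move=> pq; have q0 := prime_gt0 pq; have q1 := prime_gt1 pq.
rewrite /A (count_split _ _ (fun n => q %| n)).
congr (_ + _).
- apply: eq_in_count => n; rewrite mem_iota => /andP [n1 _] /=.
  rewrite ltnS leq_eqVlt; case: (boolP (q %| n)) => qn /=.
  + rewrite andbF; apply/esym/negbTE; rewrite -leqNgt.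
    by apply: max_pdiv_max; rewrite mem_primes pq n1 qn.
  + rewrite andbT; case: eqP => // E. exfalso.
    case: (pdiv_small n); rewrite E.
    * by rewrite leqNgt q1.
    * move=> _; move: qn; by rewrite -E max_pdiv_dvd.
- rewrite count_mul //; apply: eq_in_count => m; rewrite mem_iota => /andP [m1 _] /=.
  have qm0 : 0 < q * m by rewrite muln_gt0 q0.
  apply/idP/idP.
  + move/(smoothP _ _ qm0 (leqW q1)) => h. apply/(smoothP _ _ m1 (leqW q1)) => p pp pm.
    by apply: h => //; apply: dvdn_mull.
  + move/(smoothP _ _ m1 (leqW q1)) => h. apply/(smoothP _ _ qm0 (leqW q1)) => p pp.
    rewrite Euclid_dvdM // => /orP [pq'|pm]; last exact: h.
    by move: pq'; rewrite dvdn_prime2 // => /eqP ->.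
Qed.

Open Scope R_scope.

Lemma exp_le a b : a <= b -> exp a <= exp b.
Proof. intro h; destruct (Rle_lt_or_eq_dec _ _ h) as [h'|h']; [left; now apply exp_increasing | now subst]. Qed.

Lemma ln_le a b : 0 < a -> a <= b -> ln a <= ln b.
Proof. intros ha h; destruct (Rle_lt_or_eq_dec _ _ h) as [h'|h']; [left; now apply ln_increasing | now subst; right]. Qed.

Lemma ln_le_sub1 t : 0 < t -> ln t <= t - 1.
Proof. intro ht; pose proof (exp_ineq1_le (ln t)); rewrite exp_ln in H; lra. Qed.

Lemma Rpower_ge1 (N : nat) : 1 <= Rpower (INR N) (1/8).
Proof.
destruct N as [|N].
- unfold Rpower. replace (ln (INR 0)) with 0. rewrite Rmult_0_r exp_0; lra.
  unfold ln; destruct (Rlt_dec 0 (INR 0)) as [h|h]; [exfalso; exact (Rlt_irrefl 0 h) | reflexivity].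
- unfold Rpower. apply Rle_trans with (exp 0); [rewrite exp_0; lra|]. apply exp_le.
  apply Rmult_le_pos; [lra|]. rewrite <- ln_1. apply ln_le; [lra|].
  rewrite S_INR; pose proof (pos_INR N); lra.
Qed.

Lemma Rpower_pos a c : 0 < Rpower a c.
Proof. unfold Rpower; apply exp_pos. Qed.

Lemma Rpower_div a b c : 0 < a -> 0 < b -> Rpower (a / b) c = Rpower a c * Rpower b (- c).
Proof.
intros ha hb; unfold Rpower, Rdiv. rewrite ln_mult ?ln_Rinv //; try apply Rinv_0_lt_compat; auto.
rewrite <- exp_plus; f_equal; ring.
Qed.

Lemma two_pow : Rpower 2 (-(1/8)) <= 12/13.
Proof.
rewrite Rpower_Ropp. set (r := Rpower 2 (1/8)).
assert (hr : 0 < r) by apply Rpower_pos.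
assert (r8 : Rpower r 8 = 2).
{ unfold r; rewrite Rpower_mult. replace (1/8*8) with 1 by field. apply Rpower_1; lra. }
assert (13/12 <= r).
{ destruct (Rle_lt_dec (13/12) r) as [h|h]; auto. exfalso.
  assert (Rpower r 8 < Rpower (13/12) 8) by (apply Rlt_Rpower_l; lra).
  rewrite r8 in H. replace 8 with (INR 8) in H by (simpl; lra). rewrite Rpower_pow in H; [|lra].
  simpl in H; lra. }
replace (12/13) with (/ (13/12)) by field. apply Rinv_le_contravar; lra.
Qed.

Lemma tq_le (q : nat) : (2 <= q)%N -> Rpower (INR q) (-(1/8)) <= 12/13.
Proof.
intro h. eapply Rle_trans; [|apply two_pow]. unfold Rpower. apply exp_le.
assert (2 <= INR q) by (change 2 with (INR 2); apply le_INR; apply/leP; exact h).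
assert (ln 2 <= ln (INR q)) by (apply ln_le; lra).
lra.
Qed.

Lemma Rpower_anti (a b : nat) : (1 <= a)%N -> (a <= b)%N -> Rpower (INR b) (-(1/8)) <= Rpower (INR a) (-(1/8)).
Proof.
intros h1 h2. unfold Rpower; apply exp_le.
assert (1 <= INR a) by (change 1 with (INR 1); apply le_INR; apply/leP; exact h1).
assert (INR a <= INR b) by (apply le_INR; apply/leP; exact h2).
assert (ln (INR a) <= ln (INR b)) by (apply ln_le; lra). lra.
Qed.

Lemma exp13 t : 0 <= t <= 12/13 -> 1 <= exp (13 * t) * (1 - t).
Proof.
intro h. pose proof (exp_ineq1_le (13 * t)).
assert (0 <= 1 - t) by lra.
apply Rle_trans with ((1 + 13 * t) * (1 - t)); [nra|]. apply Rmult_le_compat_r; lra.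
Qed.

Definition Bf (W q : nat) : R := INR (minn q W) + INR q * Rpower (INR W) (-(1/8)).

Lemma Bf_incr W q : (1 <= W)%N -> (1 <= q)%N -> Bf W q.+1 - Bf W q >= Rpower (INR q) (-(1/8)).
Proof.
move=> W1 q1; rewrite /Bf S_INR.
have hW := Rpower_pos (INR W) (-(1/8)).
case: (leqP W q) => h.
- have -> : minn q.+1 W = W by apply/minn_idPr; apply: leqW.
  have := Rpower_anti W q W1 h. lra.
- have -> : minn q.+1 W = q.+1 by apply/minn_idPl.
  rewrite S_INR.
  have := Rpower_anti 1 q (isT : (1 <= 1)%N) q1. simpl INR.
  have -> : Rpower 1 (-(1/8)) = 1 by rewrite /Rpower ln_1 Rmult_0_r exp_0.
  lra.
Qed.

Lemma Bf_mono W q : Bf W q <= Bf W q.+1.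
Proof.
rewrite /Bf S_INR.
have hW := Rpower_pos (INR W) (-(1/8)).
have : INR (minn q W) <= INR (minn q.+1 W).
  apply le_INR; apply/leP; rewrite leq_min; apply/andP; split;
    [apply: leq_trans (geq_minl _ _) _; exact: leqnSn | exact: geq_minr].
lra.
Qed.

Lemma bound W : (1 <= W)%N -> forall k N,
  INR (A (k + 2) N) <= exp (13 * Bf W (k + 2)) * Rpower (INR N) (1/8).
Proof.
move=> W1; elim=> [|k IH] N.
- apply Rle_trans with 1.
  + change 1 with (INR 1). apply le_INR; apply/leP; exact: A2.
  + have e2 := Rpower_ge1 N.
    have e1 : 1 <= exp (13 * Bf W (0 + 2)).
      rewrite -exp_0; apply exp_le. rewrite /Bf.
      have := pos_INR (minn (0 + 2) W); have := pos_INR (0 + 2); have := Rpower_pos (INR W) (-(1/8)).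
      nra.
    nra.
- rewrite addSn. set q := (k + 2)%N. rewrite -/q in IH. have q2 : (2 <= q)%N by rewrite /q addn2.
  have Gm : exp (13 * Bf W q) <= exp (13 * Bf W q.+1).
    apply exp_le; have := Bf_mono W q; lra.
  have HN := Rpower_ge1 N.
  case: (boolP (prime q)) => pq; last first.
    rewrite A_nonprime //. apply: Rle_trans (IH N) _.
    apply Rmult_le_compat_r; lra.
  elim/ltn_ind: N HN => N IHN HN.
  rewrite A_prime // plus_INR.
  set t := Rpower (INR q) (-(1/8)).
  have ht : 0 <= t <= 12/13 by split; [left; apply Rpower_pos | apply tq_le].
  have hinc := Bf_incr W q W1 (ltnW q2). rewrite -/t in hinc.
  have Gstep : exp (13 * Bf W q) <= exp (13 * Bf W q.+1) * (1 - t).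
    have -> : Bf W q.+1 = Bf W q + (Bf W q.+1 - Bf W q) by ring.
    rewrite Rmult_plus_distr_l exp_plus Rmult_assoc.
    rewrite -{1}(Rmult_1_r (exp (13 * Bf W q))).
    apply Rmult_le_compat_l; first by left; apply exp_pos.
    apply Rle_trans with (exp (13 * t) * (1 - t)); first exact: exp13.
    apply Rmult_le_compat_r; first lra.
    apply exp_le; lra.
  have H1 := IH N.
  have hG1 := exp_pos (13 * Bf W q.+1).
  have hNp := Rpower_pos (INR N) (1/8).
  suff : INR (A q.+1 (N %/ q)) <= exp (13 * Bf W q.+1) * (Rpower (INR N) (1/8) * t).
    move=> H2.
    have : exp (13 * Bf W q) * Rpower (INR N) (1/8) <= exp (13 * Bf W q.+1) * (1 - t) * Rpower (INR N) (1/8).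
      apply Rmult_le_compat_r; lra.
    nra.
  case: (posnP (N %/ q)) => hd.
    rewrite hd A0 /=. apply Rmult_le_pos; first lra. apply Rmult_le_pos; lra.
  have hlt : (N %/ q < N)%N.
    rewrite ltn_divLR ?(ltnW q2) //. rewrite -{1}(muln1 N) ltn_mul2l. 
    apply/andP; split; last by apply: leq_trans q2.
    by move: hd; case: (N) => [|N']; rewrite ?div0n.
  apply: Rle_trans (IHN _ hlt (Rpower_ge1 _)) _.
  apply Rmult_le_compat_l; first lra.
  have hq : 0 < INR q by apply lt_0_INR; apply/ltP; apply: leq_trans q2.
  have hd' : 0 < INR (N %/ q) by apply lt_0_INR; apply/ltP.
  have hN : 0 < INR N.
    apply lt_0_INR; apply/ltP. by move: hd; case: (N) => [|N']; rewrite ?div0n.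
  apply Rle_trans with (Rpower (INR N / INR q) (1/8)).
    apply Rle_Rpower_l; first lra. split; first lra.
    apply (Rmult_le_reg_r (INR q)); first lra.
    rewrite /Rdiv Rmult_assoc Rinv_l; last lra. rewrite Rmult_1_r -mult_INR.
    apply le_INR; apply/leP; exact: leq_divM.
  rewrite Rpower_div //; right; reflexivity.
Qed.

Lemma K_ineq (lam l : R) : 1 <= l -> 28 * (5 + ln l) * (3 + ln l) <= lam ->
  1248 * l * lam < exp (lam / 16).
Proof.
intros hl hlam.
set b := ln l. rewrite -/b in hlam.
assert (hb : 0 <= b) by (unfold b; rewrite <- ln_1; apply ln_le; lra).
assert (hp : 15 + 8 * b <= (5 + b) * (3 + b)) by nra.
assert (hlam0 : 28 * (15 + 8 * b) <= lam) by nra.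
assert (hln2 : ln 2 <= 1) by (pose proof (ln_le_sub1 2); lra).
assert (h64 : ln (lam / 64) <= lam / 64 - 1) by (apply ln_le_sub1; lra).
rewrite /Rdiv ln_mult in h64; [|lra|lra].
rewrite ln_Rinv in h64; [|lra].
assert (hc : ln 1248 + ln 64 <= 17).
{ rewrite <- ln_mult by lra.
  apply Rle_trans with (ln (2 ^ 17)).
  - apply ln_le; [lra|]. simpl; lra.
  - rewrite ln_pow; [|lra]. simpl INR. lra. }
rewrite <- (exp_ln (1248 * l * lam)) by nra.
apply exp_increasing.
rewrite ln_mult; [|nra|lra]. rewrite ln_mult; [|lra|lra].
fold b. nra.
Qed.

Lemma final_real (lam l lz : R) : 1 <= l -> 28 * (5 + ln l) * (3 + ln l) <= lam ->
  exp lam / (3 * l) <= lz ->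
  13 * (exp (lam / 2) + 1 + (exp lam * lam + 1) * exp (- (lam / 16))) < lz / 8.
Proof.
intros hl hlam hz.
have hK := K_ineq lam l hl hlam.
assert (hb : 0 <= ln l) by (rewrite <- ln_1; apply ln_le; lra).
assert (hp : 15 + 8 * ln l <= (5 + ln l) * (3 + ln l)) by nra.
assert (hlam1 : 28 * (15 + 8 * ln l) <= lam) by nra.
set F := exp (15 * lam / 16).
assert (hF1 : 1 <= F) by (unfold F; rewrite <- exp_0; apply exp_le; lra).
assert (e1 : exp lam = exp (lam / 16) * F) by (unfold F; rewrite <- exp_plus; f_equal; field).
assert (e2 : exp lam * exp (- (lam / 16)) = F) by (unfold F; rewrite <- exp_plus; f_equal; field).
assert (e3 : exp (lam / 2) <= F) by (unfold F; apply exp_le; lra).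
assert (e4 : exp (- (lam / 16)) <= 1) by (rewrite <- exp_0; apply exp_le; lra).
assert (hpos := exp_pos (- (lam / 16))).
assert (LHS : 13 * (exp (lam / 2) + 1 + (exp lam * lam + 1) * exp (- (lam / 16))) <= 52 * lam * F).
{ replace ((exp lam * lam + 1) * exp (- (lam / 16))) with (lam * F + exp (- (lam / 16))).
  - nra.
  - rewrite <- e2; ring. }
assert (RHS : 52 * lam * F < lz / 8).
{ apply Rlt_le_trans with (exp lam / (3 * l) / 8); [|lra].
  rewrite e1. apply (Rmult_lt_reg_r (24 * l)); [lra|].
  replace (exp (lam / 16) * F / (3 * l) / 8 * (24 * l)) with (exp (lam / 16) * F) by (field; lra).
  nra. }
lra.
Qed.

Lemma INR_up r : 0 <= r -> INR (Z.to_nat (up r)) = IZR (up r).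
Proof.
intro hr. rewrite INR_IZR_INZ Z2Nat.id //.
have [h1 _] := archimed r. apply le_IZR. lra.
Qed.

Lemma up_bounds r : r < IZR (up r) /\ IZR (up r) <= r + 1.
Proof. have [h1 h2] := archimed r. lra. Qed.

Lemma ln_exp1_le3 k : (k <= 4)%nat -> exp (INR k) <= 3 ^ k.
Proof.
intros _. elim: k => [|k IH]; first by simpl; rewrite exp_0; lra.
rewrite S_INR exp_plus /=. have := exp_le_3. have := exp_pos 1. have := exp_pos (INR k). nra.
Qed.

Theorem lemma10 (l x z : R) :
  1 <= l ->
  exp (Rpower 7 28 * Rpower (12 * exp 1 * l) (28 * ln (192 * exp 1 * l))) <= x ->
  Rpower x (1 / (3 * l)) <= z ->
  INR (count_upto z (fun n =>
         if Rlt_dec (INR (Pbig n)) (ln x * ln (ln x)) then true else false))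
    < Rpower z (1 / 4).
Proof.
move=> hl hx hz.
have he := exp_pos 1.
have hE : 0 < Rpower 7 28 * Rpower (12 * exp 1 * l) (28 * ln (192 * exp 1 * l)).
  apply Rmult_lt_0_compat; apply Rpower_pos.
have x0 : 0 < x by apply: Rlt_le_trans (exp_pos _) hx.
have hL : Rpower 7 28 * Rpower (12 * exp 1 * l) (28 * ln (192 * exp 1 * l)) <= ln x.
  rewrite -[X in X <= _]ln_exp. apply ln_le; [apply exp_pos | exact hx].
have L0 : 0 < ln x by lra.
have hlamE := ln_le _ _ hE hL.
rewrite ln_mult in hlamE; [|apply Rpower_pos|apply Rpower_pos].
rewrite !ln_Rpower in hlamE.
have l12 : ln (12 * exp 1 * l) = ln 12 + 1 + ln l.
  rewrite ln_mult; [|lra|lra]. rewrite ln_mult; [|lra|lra]. by rewrite ln_exp.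
have l192 : ln (192 * exp 1 * l) = ln 192 + 1 + ln l.
  rewrite ln_mult; [|lra|lra]. rewrite ln_mult; [|lra|lra]. by rewrite ln_exp.
rewrite l12 l192 in hlamE.
have hb : 0 <= ln l by rewrite -ln_1; apply ln_le; lra.
have h7 : 0 <= ln 7 by rewrite -ln_1; apply ln_le; lra.
have h12 : 2 <= ln 12.
  have := ln_exp1_le3 2 isT. simpl INR. move=> h.
  apply Rle_trans with (ln (exp (1 + 1))); first by rewrite ln_exp; lra.
  apply ln_le; [apply exp_pos|]. simpl in h; lra.
have h192 : 4 <= ln 192.
  have := ln_exp1_le3 4 isT. simpl INR. move=> h.
  apply Rle_trans with (ln (exp (1 + 1 + 1 + 1))); first by rewrite ln_exp; lra.
  apply ln_le; [apply exp_pos|]. simpl in h; lra.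
set lam := ln (ln x) in hlamE *.
have hlam : 28 * (5 + ln l) * (3 + ln l) <= lam.
  have : (5 + ln l) * (3 + ln l) <= (ln 192 + 1 + ln l) * (ln 12 + 1 + ln l) by nra.
  nra.
have eL : exp lam = ln x by rewrite /lam exp_ln.
have z0 : 0 < z by apply: Rlt_le_trans (Rpower_pos _ _) hz.
have hlz : exp lam / (3 * l) <= ln z.
  rewrite eL. have := ln_le _ _ (Rpower_pos x (1 / (3 * l))) hz.
  rewrite ln_Rpower. move=> h. apply: Rle_trans h. right; field; lra.
have key := final_real lam l (ln z) hl hlam hlz.
have hlam1 : 1 <= lam.
  have : 15 + 8 * ln l <= (5 + ln l) * (3 + ln l) by nra. nra.
have lz0 : 0 < ln z.
  apply: Rlt_le_trans hlz. apply Rdiv_lt_0_compat; [apply exp_pos | lra].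
have z1 : 1 < z.
  destruct (Rle_lt_dec z 1) as [h|h]; last done.
  have := ln_le _ _ z0 h. rewrite ln_1. lra.
set y := ln x * lam.
have y1 : 1 <= y by rewrite /y; have := exp_ineq1_le lam; rewrite eL => h; nra.
set q := Z.to_nat (up y).
set W := Z.to_nat (up (exp (lam / 2))).
set M := Z.to_nat (up z).
have [qa qb] := up_bounds y.
have [Wa Wb] := up_bounds (exp (lam / 2)).
have [Ma Mb] := up_bounds z.
have eq : INR q = IZR (up y) by apply INR_up; lra.
have eW : INR W = IZR (up (exp (lam / 2))) by apply INR_up; left; apply exp_pos.
have eM : INR M = IZR (up z) by apply INR_up; lra.
have q2 : (2 <= q)%N.
  have : INR 1 < INR q by rewrite eq /=; lra.
  by move/INR_lt/ltP.
have W1 : (1 <= W)%N.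
  have : INR 0 < INR W by rewrite eW /=; have := exp_pos (lam / 2); lra.
  by move/INR_lt/ltP.
have M1 : (1 <= M)%N.
  have : INR 0 < INR M by rewrite eM /=; lra.
  by move/INR_lt/ltP.
set N := M.-1.
have HM : M = N.+1 by rewrite /N prednK.
have eN : INR N = IZR (up z) - 1 by rewrite -eM HM S_INR; ring.
have N1 : (1 <= N)%N.
  have : INR 0 < INR N by rewrite eN /=; have := up_bounds z; lra.
  by move/INR_lt/ltP.
have hcount : (count_upto z (fun n =>
         if Rlt_dec (INR (Pbig n)) (ln x * ln (ln x)) then true else false) <= A q N)%N.
  rewrite /count_upto size_filter -/M HM iota1S count_cat /=.
  have -> : (if Rle_dec (INR N.+1) z then true else false) = false.
    rewrite -HM eM. by case: Rle_dec => // h; exfalso; lra.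
  rewrite /= !addn0. apply: sub_count => n /= /andP [_].
  case: Rlt_dec => // h _. apply/ltP; apply INR_lt. rewrite eq. rewrite /Pbig in h. exact: Rlt_trans h qa.
have hA := bound W W1 (q - 2) N. rewrite subnK // in hA.
have hN : Rpower (INR N) (1/8) <= Rpower z (1/8).
  apply Rle_Rpower_l; first lra. split; last lra.
  apply lt_0_INR; apply/ltP; exact N1.
have hBf : Bf W q <= exp (lam / 2) + 1 + (exp lam * lam + 1) * exp (- (lam / 16)).
  rewrite /Bf.
  have hm : INR (minn q W) <= INR W by apply le_INR; apply/leP; exact: geq_minr.
  have hWp : Rpower (INR W) (- (1 / 8)) <= exp (- (lam / 16)).
    rewrite /Rpower; apply exp_le.
    have : lam / 2 <= ln (INR W).
      rewrite -[X in X <= _]ln_exp. apply ln_le; [apply exp_pos | rewrite eW; lra].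
    lra.
  have hq : INR q <= exp lam * lam + 1 by rewrite eq eL; exact qb.
  have := Rpower_pos (INR W) (- (1 / 8)). have := pos_INR q.
  rewrite eW in hm. nra.
have hexp : exp (13 * Bf W q) < exp (ln z / 8) by apply exp_increasing; lra.
apply Rle_lt_trans with (exp (13 * Bf W q) * Rpower z (1/8)).
  apply Rle_trans with (INR (A q N)); first by apply le_INR; apply/leP.
  apply: Rle_trans hA _. apply Rmult_le_compat_l; [left; apply exp_pos | exact hN].
have -> : Rpower z (1/4) = exp (ln z / 8) * Rpower z (1/8).
  rewrite /Rpower -exp_plus; f_equal; field.
apply Rmult_lt_compat_r; [apply Rpower_pos | exact hexp].
Qed.
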